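(* Let $\phi(\vec{x})$ be a conjunctive query over a signature $\tau$, $\mathcal{A}$ a $\tau$-structure, $\vec{a}$ a tuple of elements of $A$ with $|\vec{a}|=|\vec{x}|$, and $\mathbb{G}$ a finite set of guarded sets of $\mathcal{A}$ such that every element of $\vec{a}$ belongs to some $X\in\mathbb{G}$. Let $\{\mathcal{A}_X:X\subseteq A\}$ be a family as defined below. If $\bigcup_{X\in\mathbb{G}}\mathcal{A}_X\models\phi[\vec{a}]$ then $\mathcal{A}\models\phi[\vec{a}]$.
   Context: A conjunctive query (CQ) is a formula $\exists\vec{y}\,\vartheta(\vec{x},\vec{y})$ with $\vartheta$ a conjunction of relational atoms. Signatures are relational (constant and relation symbols). $\{\mathcal{A}_X:X\subseteq A\}$ is a family of $\tau$-structures such that for each $X\subseteq A$ there is an isomorphism $p_X:\mathcal{A}\to\mathcal{A}_X$ with $p_X(a)=a$ for all $a\in X$, and $A_X\cap A_Y=X\cap Y$ for all $X,Y\subseteq A$ ($A_X$ the domain of $\mathcal{A}_X$). A guarded set of $\mathcal{A}$ is a finite $X\subseteq A$ containing the interpretations of all constant symbols. The union of structures with the same constant interpretations has as domain the union of domains and as relations the unions of relations. *)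

(* Defs.v *)
From HB Require Import structures.
From mathcomp Require Import all_boot.
From mathcomp Require Import boolp classical_sets cardinality.

Set Implicit Arguments.
Unset Strict Implicit.
Unset Printing Implicit Defensive.

Local Open Scope classical_set_scope.

Record signature := Signature {
  const_sym : Type;
  rel_sym : Type;
  arity : rel_sym -> nat }.

(* Propositional "for all / exists member of a list" (no eqType needed). *)
Fixpoint all_in (T : Type) (P : T -> Prop) (s : seq T) : Prop :=
  match s with nil => True | x :: s' => P x /\ all_in P s' end.
Fixpoint some_in (T : Type) (P : T -> Prop) (s : seq T) : Prop :=
  match s with nil => False | x :: s' => P x \/ some_in P s' end.

(* tau-structures whose domain is a subset of a common universe U
   (needed to speak of A_X \cap A_Y and of unions of structures). *)
Record structure (tau : signature) (U : Type) := Structure {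
  dom : set U;
  cst : const_sym tau -> U;
  rel : rel_sym tau -> seq U -> Prop }.

Definition wf_structure tau U (S : structure tau U) : Prop :=
  (forall c, dom S (cst S c)) /\
  (forall r t, rel S r t -> size t = arity r /\ all_in (dom S) t).

Definition is_iso tau U (A B : structure tau U) (p : U -> U) : Prop :=
  (forall u, dom A u -> dom B (p u)) /\
  (forall u v, dom A u -> dom A v -> p u = p v -> u = v) /\
  (forall w, dom B w -> exists u, dom A u /\ p u = w) /\
  (forall c, p (cst A c) = cst B c) /\
  (forall r t, all_in (dom A) t -> (rel A r t <-> rel B r (map p t))) /\
  (forall r t, rel B r t -> all_in (dom B) t).

(* Conjunctive queries  exists y_0..y_{ny-1}, /\ atoms,
   with free variables x_0..x_{nx-1}. Terms: free var, bound var, constant. *)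
Inductive term (tau : signature) (nx ny : nat) :=
| TX of 'I_nx
| TY of 'I_ny
| TC of const_sym tau.

Definition atom tau nx ny := (rel_sym tau * seq (term tau nx ny))%type.

Record cq (tau : signature) (nx ny : nat) := CQ { atoms : seq (atom tau nx ny) }.

Definition eval_term tau U nx ny (S : structure tau U)
  (a : 'I_nx -> U) (b : 'I_ny -> U) (t : term tau nx ny) : U :=
  match t with TX i => a i | TY j => b j | TC c => cst S c end.

Definition sat tau U nx ny (S : structure tau U) (phi : cq tau nx ny)
  (a : 'I_nx -> U) : Prop :=
  exists b : 'I_ny -> U, (forall j, dom S (b j)) /\
    all_in (fun at_ : atom tau nx ny =>
            rel S at_.1 (map (eval_term S a b) at_.2)) (atoms phi).

Definition guarded tau U (A : structure tau U) (X : set U) : Prop :=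
  finite_set X /\ X `<=` dom A /\ (forall c, X (cst A c)).

Definition good_family tau U (A : structure tau U)
  (fam : set U -> structure tau U) (p : set U -> U -> U) : Prop :=
  (forall X, X `<=` dom A ->
     wf_structure (fam X) /\ is_iso A (fam X) (p X) /\
     (forall u, X u -> p X u = u)) /\
  (forall X Y, X `<=` dom A -> Y `<=` dom A -> X <> Y ->
     dom (fam X) `&` dom (fam Y) = X `&` Y).

(* Union of the structures A_X, X in G (they share the constant
   interpretations of A, since guarded sets contain the constants). *)
Definition union_struct tau U (A : structure tau U)
  (fam : set U -> structure tau U) (G : seq (set U)) : structure tau U :=
  {| dom := fun u => some_in (fun X => dom (fam X) u) G;
     cst := cst A;
     rel := fun r t => some_in (fun X => rel (fam X) r t) G |}.

(* Main.v *)
Require Import Defs.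
From mathcomp Require Import all_boot.
From mathcomp Require Import boolp classical_sets.
From Stdlib Require List.
Local Open Scope classical_set_scope.

Lemma some_in_ex (T : Type) (P : T -> Prop) s :
  some_in P s -> exists x, List.In x s /\ P x.
Proof.
elim: s => //= x s IH [H|H]; first by exists x; split => //; left.
by case: (IH H) => y [Hy Py]; exists y; split => //; right.
Qed.

Lemma all_in_all (T : Type) (P : T -> Prop) s :
  all_in P s -> forall x, List.In x s -> P x.
Proof.
elim: s => //= x s IH [Px Hs] y [<-|Hy] //; exact: IH.
Qed.

Lemma all_in_impl (T : Type) (P Q : T -> Prop) s :
  (forall x, P x -> Q x) -> all_in P s -> all_in Q s.
Proof. move=> H; elim: s => //= x s IH [Px Hs]; split; auto. Qed.

Arguments some_in_ex {T P s}.
Arguments all_in_all {T P s}.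
Arguments all_in_impl {T P Q s}.

Theorem lemma3 (tau : signature) (U : Type) (nx ny : nat)
  (phi : cq tau nx ny) (A : structure tau U) (a : 'I_nx -> U)
  (G : seq (set U)) (fam : set U -> structure tau U) (p : set U -> U -> U) :
  wf_structure A ->
  (forall i, dom A (a i)) ->
  all_in (guarded A) G ->
  (forall i, some_in (fun X => X (a i)) G) ->
  good_family A fam p ->
  sat (union_struct A fam G) phi a ->
  sat A phi a.
Proof.
move=> [wfc wfr] Ha HG Hai [Hfam Hdisj] [b [Hb Hat]].
have GA : forall X, List.In X G -> X `<=` dom A.
  by move=> X /(all_in_all HG) [_ []].
have key : forall X Y, List.In X G -> List.In Y G -> forall u v,
    dom A u -> dom A v -> p X u = p Y v -> u = v.
  move=> X Y HX HY u v Hu Hv E.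
  have [_ [[iX1 [iX2 _]] fX]] := Hfam X (GA X HX).
  have [_ [[iY1 [iY2 _]] fY]] := Hfam Y (GA Y HY).
  have [XY|nXY] := pselect (X = Y).
    by subst Y; exact: iX2.
  have : (dom (fam X) `&` dom (fam Y)) (p X u) by split => //; [exact: iX1|rewrite E; exact: iY1].
  rewrite Hdisj //; [|exact: GA|exact: GA] => -[wX wY].
  have eX := fX _ wX; have eY := fY _ wY.
  have u1 : p X u = u by apply: iX2; [exact: (GA X HX _ wX)|exact: Hu|by rewrite eX].
  have v1 : p X u = v by apply: iY2; [exact: (GA Y HY _ wY)|exact: Hv|by rewrite eY E].
  by rewrite -u1 -v1.
have L : forall X Y, List.In X G -> List.In Y G -> forall u w,
    dom A u -> p Y u = w -> dom (fam X) w -> p X u = w.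
  move=> X Y HX HY u w Hu Ew Hw.
  have [_ [[_ [_ [sX _]]] _]] := Hfam X (GA X HX).
  have [v [Hv Ev]] := sX w Hw.
  have uv : u = v by apply: (key Y X) => //; rewrite Ew Ev.
  by rewrite uv.
have Hb' : forall j, exists u, dom A u /\
    exists Y, List.In Y G /\ p Y u = b j.
  move=> j; have [Y [HY Dj]] := some_in_ex (Hb j).
  have [_ [[_ [_ [sY _]]] _]] := Hfam Y (GA Y HY).
  have [u [Hu Eu]] := sY _ Dj.
  by exists u; split => //; exists Y.
have [b' Hb'f] := choice Hb'.
exists b'; split; first by move=> j; case: (Hb'f j).
have domev : forall tm, dom A (eval_term A a b' tm).
  by case=> [i|j|c] /=; [exact: Ha|case: (Hb'f j)|exact: wfc].
have termok : forall X, List.In X G -> forall tm,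
    dom (fam X) (eval_term (union_struct A fam G) a b tm) ->
    p X (eval_term A a b' tm) = eval_term (union_struct A fam G) a b tm.
  move=> X HX [i|j|c] /= Hd.
  - have [Y [HY Yi]] := some_in_ex (Hai i).
    have [_ [_ fY]] := Hfam Y (GA Y HY).
    exact: (L X Y HX HY (a i) (a i) (Ha i) (fY _ Yi) Hd).
  - have [Hu [Y [HY EY]]] := Hb'f j.
    exact: (L X Y HX HY _ _ Hu EY Hd).
  - have [_ [_ fX]] := Hfam X (GA X HX).
    apply: fX; by have [_ [_ ]] := all_in_all HG X HX.
apply: all_in_impl Hat => -[r ts] /= /some_in_ex [X [HX HR]].
have [_ [[_ [_ [_ [_ [iR iD]]]]] _]] := Hfam X (GA X HX).
have Hall := iD _ _ HR.
have Hmap : map (p X) (map (eval_term A a b') ts) =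
            map (eval_term (union_struct A fam G) a b) ts.
  elim: ts Hall {HR} => //= tm ts IH [H1 H2].
  by rewrite termok // IH.
have Hd : all_in (dom A) (map (eval_term A a b') ts).
  by elim: ts {HR Hall Hmap} => //= tm ts IH; split.
by apply/(iR r _ Hd); rewrite Hmap.
Qed.
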